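(* Let $A \in \mathbb{R}^{m \times r}$, $b \in \mathbb{R}^m$, $P = \{ x \in \mathbb{R}^r \mid Ax \ge b\}$, $C^r = \{ x \in \mathbb{R}^r \mid Ax \ge 0\}$, and \[ \tilde C = \{ (x, \xi, Ax - \xi b) \in \mathbb{R}^{r+1+m} \mid \xi \ge 0 \text{ and } Ax - \xi b \ge 0\}. \] Then: (1) for nonzero $x \in C^r$, $x$ is conformally non-decomposable in $C^r$ if and only if $(x, 0, Ax)$ is conformally non-decomposable in $\tilde C$; (2) for $x \in P$, $x$ is convex-conformally non-decomposable in $P$ if and only if $(x, 1, Ax - b)$ is conformally non-decomposable in $\tilde C$.
   Context: For $x \in \mathbb{R}^n$, $\operatorname{sign}(x) \in \{-,0,+\}^n$ is obtained by applying the sign function componentwise; the relations $0<-$, $0<+$ induce a componentwise partial order on $\{-,0,+\}^n$. For a convex cone $K$, a nonzero $x \in K$ is conformally non-decomposable in $K$ if for all nonzero $x^1,x^2 \in K$ with $\operatorname{sign}(x^1),\operatorname{sign}(x^2) \le \operatorname{sign}(x)$, $x = x^1 + x^2$ implies $x^1 = \lambda x^2$ for some $\lambda > 0$. A vector $x \in P$ is convex-conformally non-decomposable in $P$ if for all $x^1,x^2 \in P$ with $\operatorname{sign}(x^1),\operatorname{sign}(x^2) \le \operatorname{sign}(x)$ and all $0<\lambda<1$, $x = \lambda x^1 + (1-\lambda)x^2$ implies $x^1 = x^2$. *)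

(* Defs.v *)
From HB Require Import structures.
From mathcomp Require Import all_boot all_order all_algebra.
Set Implicit Arguments. Unset Strict Implicit. Unset Printing Implicit Defensive.
Import Order.TTheory GRing.Theory Num.Theory.
Local Open Scope ring_scope.

Section Defs.
Variable R : realFieldType.

(* componentwise sign order on {-,0,+}^n: 0 < -, 0 < +, - and + incomparable.
   sign(x) <= sign(y) iff each component sign of x is 0 or equals that of y. *)
Definition sign_le n (x y : 'cV[R]_n) : Prop :=
  forall i : 'I_n, Num.sg (x i 0) = 0 \/ Num.sg (x i 0) = Num.sg (y i 0).

Definition vnneg n (v : 'cV[R]_n) : Prop := forall i : 'I_n, 0 <= v i 0.

Definition conf_nondec n (K : 'cV[R]_n -> Prop) (x : 'cV[R]_n) : Prop :=
  K x /\ x <> 0 /\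
  forall x1 x2 : 'cV[R]_n, K x1 -> K x2 -> x1 <> 0 -> x2 <> 0 ->
    sign_le x1 x -> sign_le x2 x -> x = x1 + x2 ->
    exists lam : R, 0 < lam /\ x1 = lam *: x2.

Definition cconf_nondec n (P : 'cV[R]_n -> Prop) (x : 'cV[R]_n) : Prop :=
  P x /\
  forall (x1 x2 : 'cV[R]_n) (lam : R), P x1 -> P x2 ->
    sign_le x1 x -> sign_le x2 x -> 0 < lam -> lam < 1 ->
    x = lam *: x1 + (1 - lam) *: x2 -> x1 = x2.

Definition polyhedronP m r (A : 'M[R]_(m, r)) (b : 'cV[R]_m) (x : 'cV[R]_r) : Prop :=
  vnneg (A *m x - b).

Definition coneC m r (A : 'M[R]_(m, r)) (x : 'cV[R]_r) : Prop :=
  vnneg (A *m x).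

Definition triple m r (x : 'cV[R]_r) (xi : R) (y : 'cV[R]_m) : 'cV[R]_(r + 1 + m) :=
  col_mx (col_mx x (const_mx xi)) y.

Definition coneCt m r (A : 'M[R]_(m, r)) (b : 'cV[R]_m) (v : 'cV[R]_(r + 1 + m)) : Prop :=
  exists (x : 'cV[R]_r) (xi : R),
    v = triple x xi (A *m x - xi *: b) /\ 0 <= xi /\ vnneg (A *m x - xi *: b).

End Defs.

(* Main.v *)
Require Import Defs.
From HB Require Import structures.
From mathcomp Require Import all_boot all_order all_algebra.
From mathcomp Require Import ring lra.
Import Order.TTheory GRing.Theory Num.Theory.
Local Open Scope ring_scope.
Set Implicit Arguments. Unset Strict Implicit.

Section H.
Variable R : realFieldType.
Variables m r : nat.
Implicit Types (x : 'cV[R]_r) (y : 'cV[R]_m).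

Lemma triple_inj x xi y x' xi' y' :
  triple x xi y = triple x' xi' y' -> [/\ x = x', xi = xi' & y = y'].
Proof.
rewrite /triple => /eq_col_mx [/eq_col_mx [-> e] ->]; split => //.
by have := congr1 (fun M : 'cV[R]_1 => M 0 0) e; rewrite !mxE.
Qed.

Lemma tripleD x1 xi1 y1 x2 xi2 y2 :
  triple x1 xi1 y1 + triple x2 xi2 y2 = triple (x1 + x2) (xi1 + xi2) (y1 + y2).
Proof.
rewrite /triple !add_col_mx; congr (col_mx (col_mx _ _) _).
by apply/matrixP => i j; rewrite !mxE.
Qed.

Lemma tripleZ c x xi y : c *: triple x xi y = triple (c *: x) (c * xi) (c *: y).
Proof.
rewrite /triple !scale_col_mx; congr (col_mx (col_mx _ _) _).
by apply/matrixP => i j; rewrite !mxE.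
Qed.

Lemma triple0 : triple (0 : 'cV[R]_r) 0 (0 : 'cV[R]_m) = 0.
Proof.
rewrite /triple; have -> : const_mx 0 = 0 :> 'cV[R]_1 by apply/matrixP => i j; rewrite !mxE.
by rewrite !col_mx0.
Qed.

Lemma sign_le_triple x xi y x' xi' y' :
  sign_le (triple x xi y) (triple x' xi' y') <->
  [/\ sign_le x x', Num.sg xi = 0 \/ Num.sg xi = Num.sg xi' & sign_le y y'].
Proof.
rewrite /triple; split.
- move=> H; split.
  + by move=> i; have := H (lshift m (lshift 1 i)); rewrite !col_mxEu.
  + by have := H (lshift m (rshift r ord0)); rewrite !col_mxEu !col_mxEd !mxE.
  + by move=> i; have := H (rshift _ i); rewrite !col_mxEd.
- case=> H1 H2 H3 i; rewrite -(splitK i); case: (split i) => [j|j] /=.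
  + rewrite !col_mxEu -(splitK j); case: (split j) => [k|k] /=.
    * by rewrite !col_mxEu.
    * by rewrite !col_mxEd !mxE.
  + by rewrite !col_mxEd.
Qed.

Lemma sg_nneg_sum (a c : R) : 0 <= a -> 0 <= c -> Num.sg a = 0 \/ Num.sg a = Num.sg (a + c).
Proof.
move=> ha hc; have [->|ha0] := eqVneq a 0; first by left; rewrite sgr0.
right; have hp : 0 < a by rewrite lt0r ha0 ha.
have hp' : 0 < a + c by lra.
by rewrite !gtr0_sg.
Qed.

Lemma sign_le_nneg n (y1 y2 : 'cV[R]_n) : vnneg y1 -> vnneg y2 -> sign_le y1 (y1 + y2).
Proof. by move=> h1 h2 i; rewrite [(y1 + y2) i 0]mxE; apply: sg_nneg_sum. Qed.

Lemma sign_le_scale n c (x1 y1 : 'cV[R]_n) : 0 < c -> sign_le x1 y1 -> sign_le (c *: x1) y1.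
Proof. by move=> hc h i; rewrite mxE sgrM gtr0_sg // mul1r. Qed.

Lemma sg_add (a c : R) : Num.sg c = 0 \/ Num.sg c = Num.sg a -> Num.sg (a + c) = Num.sg a.
Proof.
case=> [/eqP|e]; first by rewrite sgr_eq0 => /eqP ->; rewrite addr0.
case: (ltrgt0P a) e => ha.
- rewrite (gtr0_sg ha) => /eqP; rewrite sgr_cp0 => hc.
  by rewrite !gtr0_sg //; lra.
- rewrite (ltr0_sg ha) => /eqP; rewrite sgr_cp0 => hc.
  by rewrite !ltr0_sg //; lra.
- move=> e; rewrite ha in e *; move: e; rewrite sgr0 => /eqP; rewrite sgr_eq0 => /eqP ->; by rewrite addr0 sgr0.
Qed.

Lemma inv_nneg (s bb xi : R) : 0 < xi -> 0 <= s - xi * bb -> 0 <= xi^-1 * s - bb.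
Proof.
move=> hp h.
have -> : xi^-1 * s - bb = xi^-1 * (s - xi * bb) by field; apply: lt0r_neq0.
by apply: mulr_ge0 => //; rewrite invr_ge0 ltW.
Qed.

Variable A : 'M[R]_(m, r).
Variable b : 'cV[R]_m.

Lemma P_scale xi (z : 'cV[R]_r) : 0 < xi -> vnneg (A *m z - xi *: b) ->
  polyhedronP A b (xi^-1 *: z).
Proof.
move=> hp h i; have := h i; rewrite -scalemxAr !mxE => hi.
exact: inv_nneg hp hi.
Qed.

Lemma zero_case x x1 x2 : cconf_nondec (polyhedronP A b) x -> x = x1 + x2 ->
  vnneg (A *m x1) -> vnneg (A *m x2 - b) -> sign_le x1 x -> sign_le x2 x -> x1 = 0.
Proof.
case=> hx H ex h1 h2 s1 s2.
have e2 : x2 = x - x1 by rewrite ex addrC addKr.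
suff e : x + x1 = x - x1.
  apply/matrixP => i j; have := congr1 (fun M : 'cV[R]_r => M i j) e; rewrite !mxE; lra.
apply: (H _ _ (2^-1)).
- move=> i; rewrite mulmxDr; have := hx i; have := h1 i; rewrite !mxE; lra.
- by rewrite -e2.
- move=> i; right; rewrite mxE; apply: sg_add; exact: s1.
- by rewrite -e2.
- lra.
- lra.
- apply/matrixP => i j; rewrite !mxE; lra.
Qed.

End H.

Theorem lemma3 (R : realFieldType) (m r : nat) (A : 'M[R]_(m, r)) (b : 'cV[R]_m) :
  (forall x : 'cV[R]_r, coneC A x -> x <> 0 ->
     (conf_nondec (coneC A) x <->
      conf_nondec (coneCt A b) (triple x 0 (A *m x))))
  /\
  (forall x : 'cV[R]_r, polyhedronP A b x ->
     (cconf_nondec (polyhedronP A b) x <->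
      conf_nondec (coneCt A b) (triple x 1 (A *m x - b)))).
Proof.
split.
- move=> x hx hx0; split.
  + case=> _ [_ H]; split; last split.
    * by exists x, 0; rewrite scale0r subr0.
    * by rewrite -triple0 => /triple_inj [].
    * move=> v1 v2 [x1 [xi1 [-> [h1 hy1]]]] [x2 [xi2 [-> [h2 hy2]]]] n1 n2
        /sign_le_triple [s1 t1 _] /sign_le_triple [s2 t2 _].
      rewrite tripleD => /triple_inj [ex exi _].
      have xi10 : xi1 = 0.
        by apply/eqP; rewrite -sgr_eq0; rewrite sgr0 in t1; case: t1 => ->.
      have xi20 : xi2 = 0.
        by apply/eqP; rewrite -sgr_eq0; rewrite sgr0 in t2; case: t2 => ->.
      subst xi1 xi2; rewrite !scale0r !subr0 in n1 n2 hy1 hy2 *.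
      have n1' : x1 <> 0 by move=> e; apply: n1; rewrite e mulmx0 triple0.
      have n2' : x2 <> 0 by move=> e; apply: n2; rewrite e mulmx0 triple0.
      have [lam [hl e]] := H x1 x2 hy1 hy2 n1' n2' s1 s2 ex.
      exists lam; split => //; rewrite tripleZ e -scalemxAr mulr0.
      by rewrite ?scale0r ?subr0.
  + case=> _ [_ H]; split => //; split => //.
    move=> x1 x2 h1 h2 n1 n2 s1 s2 ex.
    have := H (triple x1 0 (A *m x1)) (triple x2 0 (A *m x2)).
    case.
    * by exists x1, 0; rewrite scale0r subr0.
    * by exists x2, 0; rewrite scale0r subr0.
    * by rewrite -triple0 => /triple_inj [].
    * by rewrite -triple0 => /triple_inj [].
    * apply/sign_le_triple; split => //; first by right.
      by rewrite ex mulmxDr; apply: sign_le_nneg.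
    * apply/sign_le_triple; split => //; first by right.
      by rewrite ex mulmxDr addrC; apply: sign_le_nneg.
    * by rewrite tripleD ex mulmxDr addr0.
    * by move=> lam [hl]; rewrite tripleZ => /triple_inj [e _ _]; exists lam.
- move=> x hx; split.
  + move=> hc; case: (hc) => _ H; split; last split.
    * by exists x, 1; rewrite scale1r; split => //; split => //; apply: ler01.
    * by rewrite -triple0 => /triple_inj [_ /eqP]; rewrite oner_eq0.
    * move=> v1 v2 [x1 [xi1 [-> [h1 hy1]]]] [x2 [xi2 [-> [h2 hy2]]]] n1 n2
        /sign_le_triple [s1 _ _] /sign_le_triple [s2 _ _].
      rewrite tripleD => /triple_inj [ex exi _].
      have [z1|p1] := eqVneq xi1 0.
        subst xi1; rewrite scale0r subr0 in hy1 n1.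
        rewrite add0r in exi; subst xi2; rewrite scale1r in hy2.
        exfalso; apply: n1.
        by rewrite (zero_case hc ex hy1 hy2 s1 s2) mulmx0 triple0.
      have [z2|p2] := eqVneq xi2 0.
        subst xi2; rewrite scale0r subr0 in hy2 n2.
        rewrite addr0 in exi; subst xi1; rewrite scale1r in hy1.
        exfalso; apply: n2.
        rewrite addrC in ex.
        by rewrite (zero_case hc ex hy2 hy1 s2 s1) mulmx0 triple0.
      have q1 : 0 < xi1 by rewrite lt0r p1 h1.
      have q2 : 0 < xi2 by rewrite lt0r p2 h2.
      have eu : xi1^-1 *: x1 = xi2^-1 *: x2.
        apply: (H _ _ xi1 (P_scale q1 hy1) (P_scale q2 hy2) _ _ q1).
        - by apply: sign_le_scale => //; rewrite invr_gt0.
        - by apply: sign_le_scale => //; rewrite invr_gt0.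
        - lra.
        - have -> : 1 - xi1 = xi2 by lra.
          by rewrite !scalerA !mulfV ?lt0r_neq0 // !scale1r.
      exists (xi1 / xi2); split; first by rewrite divr_gt0.
      have ex1 : x1 = (xi1 / xi2) *: x2.
        by rewrite -scalerA -eu scalerA mulfV ?lt0r_neq0 // scale1r.
      have ec : xi1 / xi2 * xi2 = xi1 by rewrite divfK // lt0r_neq0.
      by rewrite tripleZ ec -ex1 scalerBr scalerA ec scalemxAr -ex1.
  + case=> _ [_ H]; split => // x1 x2 lam h1 h2 s1 s2 hl0 hl1 ex.
    have ey : A *m x - b = lam *: (A *m x1 - b) + (1 - lam) *: (A *m x2 - b).
      rewrite ex mulmxDr -!scalemxAr !scalerBr scalerBl scale1r.
      set a1 := lam *: (A *m x1); set a2 := A *m x2.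
      apply/matrixP => i j; rewrite !mxE; lra.
    have hl2 : 0 < 1 - lam by lra.
    have Hc : forall (c : R) z, 0 < c -> polyhedronP A b z ->
        coneCt A b (triple (c *: z) c (c *: (A *m z - b))).
      move=> c z hc hz; exists (c *: z), c; split.
        by rewrite -scalemxAr scalerBr.
      split; first exact: ltW.
      rewrite -scalemxAr -scalerBr => i; rewrite mxE; apply: mulr_ge0 => //.
      exact: ltW.
    have := H _ _ (Hc _ _ hl0 h1) (Hc _ _ hl2 h2).
    case.
    * by rewrite -triple0 => /triple_inj [_ e _]; lra.
    * by rewrite -triple0 => /triple_inj [_ e _]; lra.
    * apply/sign_le_triple; split.
      - exact: sign_le_scale.
      - by right; rewrite !gtr0_sg //; lra.
      - rewrite ey; apply: sign_le_nneg => i; rewrite mxE; apply: mulr_ge0;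
          [exact: ltW | exact: h1 | exact: ltW | exact: h2].
    * apply/sign_le_triple; split.
      - exact: sign_le_scale.
      - by right; rewrite !gtr0_sg //; lra.
      - rewrite ey [X in sign_le _ X]addrC; apply: sign_le_nneg => i; rewrite mxE; apply: mulr_ge0;
          [exact: ltW | exact: h2 | exact: ltW | exact: h1].
    * by rewrite tripleD -ex -ey [lam + _]addrC subrK.
    * move=> mu [hmu]; rewrite tripleZ => /triple_inj [e1 e2 _].
      rewrite scalerA -e2 in e1.
      have := congr1 (fun v => lam^-1 *: v) e1.
      by rewrite !scalerA mulVf ?lt0r_neq0 // !scale1r.
Qed.
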